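(* For every $n\geq3$, the dominating ideal $DI(C_n)=\bigcap_{i=1}^n(x_i,x_{i+1},x_{i+2})\subset K[x_1,\ldots,x_n]$ (indices modulo $n$) of the cycle $C_n$ is nearly normally torsion-free.
   Context: $C_n$ is the cycle with vertices $x_1,\ldots,x_n$ and edges $\{x_i,x_{i+1}\}$ ($1\le i\le n-1$) and $\{x_n,x_1\}$. For a simple graph $G$, $N_G[i]=\{j:\{i,j\}\in E(G)\}\cup\{i\}$; $S\subseteq V(G)$ is a dominating set if $S\cap N_G[v]\neq\emptyset$ for all $v$, and $DI(G)=(\prod_{i\in S}x_i : S\text{ a minimal dominating set})$. A monomial ideal $I\subset R$ is nearly normally torsion-free if there exist a positive integer $k$ and a monomial prime ideal $\mathfrak p$ such that $\mathrm{Ass}(R/I^m)=\mathrm{Min}(I)$ for all $1\le m\le k$ and $\mathrm{Ass}(R/I^m)\subseteq\mathrm{Min}(I)\cup\{\mathfrak p\}$ for all $m\geq k+1$, where $\mathrm{Ass}$ and $\mathrm{Min}$ denote associated and minimal primes. *)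

(* Defs.v *)
From mathcomp Require Import all_boot all_order all_algebra.
From mathcomp Require Import mpoly.
Set Implicit Arguments. Unset Strict Implicit. Unset Printing Implicit Defensive.
Import GRing.Theory.
Local Open Scope ring_scope.

Section Ideals.
Variable R : comNzRingType.

Definition gen_ideal (G : R -> Prop) : R -> Prop :=
  fun f => exists s : seq (R * R),
    (forall p, p \in s -> G p.2) /\ f = \sum_(p <- s) p.1 * p.2.

Definition ideal_pow (I : R -> Prop) (m : nat) : R -> Prop :=
  gen_ideal (fun f => exists s : seq R,
     size s = m /\ (forall a, a \in s -> I a) /\ f = \prod_(a <- s) a).

Definition is_ideal (I : R -> Prop) : Prop :=
  I 0 /\ (forall a b, I a -> I b -> I (a + b)) /\ (forall r a, I a -> I (r * a)).

Definition prime_ideal (P : R -> Prop) : Prop :=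
  is_ideal P /\ ~ P 1 /\ (forall a b, P (a * b) -> P a \/ P b).

Definition subideal (I J : R -> Prop) : Prop := forall f, I f -> J f.
Definition same_ideal (I J : R -> Prop) : Prop := forall f, I f <-> J f.

Definition colon (I : R -> Prop) (f : R) : R -> Prop := fun g => I (g * f).

Definition is_ass (I : R -> Prop) (P : R -> Prop) : Prop :=
  prime_ideal P /\ exists f : R, same_ideal P (colon I f).

Definition is_min_prime (I : R -> Prop) (P : R -> Prop) : Prop :=
  prime_ideal P /\ subideal I P /\
  (forall Q, prime_ideal Q -> subideal I Q -> subideal Q P -> subideal P Q).
End Ideals.

Section Poly.
Variables (n : nat) (K : fieldType).
Local Notation R := {mpoly K[n]}.

Definition monomial_prime (p : R -> Prop) : Prop :=
  exists A : {set 'I_n},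
    same_ideal p (gen_ideal (fun f : R => exists i, i \in A /\ f = 'X_i)).

Definition monomial_ideal (I : R -> Prop) : Prop :=
  exists G : R -> Prop, (forall f, G f -> exists m : 'X_{1..n}, f = 'X_[m])
    /\ same_ideal I (gen_ideal G).

Definition nearly_normally_torsion_free (I : R -> Prop) : Prop :=
  monomial_ideal I /\
  exists (k : nat) (p : R -> Prop),
    (0 < k)%N /\ monomial_prime p /\
    (forall m, (1 <= m <= k)%N ->
        forall P, is_ass (ideal_pow I m) P <-> is_min_prime I P) /\
    (forall m, (k + 1 <= m)%N ->
        forall P, is_ass (ideal_pow I m) P -> is_min_prime I P \/ same_ideal P p).
End Poly.

(* vertices 'I_n (x_1..x_n are 'X_0..'X_(n-1)); edges {i, i+1 mod n} *)
Definition cycle_adj (n : nat) (i j : 'I_n) : bool :=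
  ((val j == (val i).+1 %% n)%N || (val i == (val j).+1 %% n)%N).

Definition closed_nbhd (n : nat) (i : 'I_n) : {set 'I_n} :=
  [set j | (j == i) || cycle_adj i j].

Definition dominating (n : nat) (S : {set 'I_n}) : bool :=
  [forall v : 'I_n, S :&: closed_nbhd v != set0].

Definition minimal_dominating (n : nat) (S : {set 'I_n}) : bool :=
  dominating S && [forall T : {set 'I_n}, (T \proper S) ==> ~~ dominating T].

Definition DI_cycle (n : nat) (K : fieldType) : {mpoly K[n]} -> Prop :=
  gen_ideal (fun f : {mpoly K[n]} => exists S : {set 'I_n},
     minimal_dominating S /\ f = \prod_(i in S) 'X_i).
Arguments DI_cycle n K : clear implicits.

(* Main.v *)
Require Import Defs.
From mathcomp Require Import all_boot all_order all_algebra.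
From mathcomp Require Import mpoly.
From mathcomp Require Import zify.
From Stdlib Require Import Classical ClassicalEpsilon.
Set Implicit Arguments. Unset Strict Implicit. Unset Printing Implicit Defensive.

Module P1.
Import GRing.Theory.
Local Open Scope ring_scope.

Section GenIdeal.
Variable R : comNzRingType.
Implicit Types (I J P : R -> Prop) (G : R -> Prop).

Lemma gen_ideal_is_ideal G : is_ideal (gen_ideal G).
Proof.
split; [|split].
- by exists [::]; split => //; rewrite big_nil.
- move=> a b [s [Hs ->]] [t [Ht ->]]; exists (s ++ t); split.
    by move=> p; rewrite mem_cat => /orP [/Hs|/Ht].
  by rewrite big_cat.
- move=> r a [s [Hs ->]]; exists [seq (r * p.1, p.2) | p <- s]; split.
    by move=> p /mapP [q Hq ->] /=; apply: Hs.
  by rewrite big_map mulr_sumr; apply: eq_bigr => p _; rewrite mulrA.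
Qed.

Lemma gen_ideal_in G g : G g -> gen_ideal G g.
Proof.
move=> Hg; exists [:: (1, g)]; split; first by move=> p; rewrite inE => /eqP ->.
by rewrite big_seq1 mul1r.
Qed.

Lemma ideal_sum J (T : eqType) (r : seq T) (F : T -> R) :
  is_ideal J -> (forall x, x \in r -> J (F x)) -> J (\sum_(x <- r) F x).
Proof.
move=> [J0 [JD JM]]; elim: r => [|x r IH] H; first by rewrite big_nil.
rewrite big_cons; apply: JD; first by apply: H; rewrite inE eqxx.
by apply: IH => y Hy; apply: H; rewrite inE Hy orbT.
Qed.

Lemma gen_ideal_sub G J : is_ideal J -> (forall g, G g -> J g) ->
  subideal (gen_ideal G) J.
Proof.
move=> HJ HG f [s [Hs ->]]; apply: ideal_sum => // p Hp.
by case: HJ => _ [_ JM]; apply: JM; apply: HG; apply: Hs.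
Qed.

Lemma idealMl J a b : is_ideal J -> J b -> J (a * b).
Proof. by move=> [_ [_ JM]]; apply: JM. Qed.

Lemma idealMr J a b : is_ideal J -> J a -> J (a * b).
Proof. by move=> HJ Ha; rewrite mulrC; apply: idealMl. Qed.

Lemma prime_prod P (T : eqType) (r : seq T) (F : T -> R) :
  prime_ideal P -> P (\prod_(x <- r) F x) -> exists2 x, x \in r & P (F x).
Proof.
move=> [HI [P1 Pp]]; elim: r => [|x r IH]; first by rewrite big_nil.
rewrite big_cons => /Pp [Hx|Hr]; first by exists x; rewrite ?inE ?eqxx.
by case: (IH Hr) => y Hy Py; exists y; rewrite ?inE ?Hy ?orbT.
Qed.

Lemma prime_exp P a k : prime_ideal P -> P (a ^+ k) -> P a.
Proof.
move=> HP; elim: k => [|k IH]; first by rewrite expr0; case: HP => _ [].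
by rewrite exprS; case: HP => _ [_ Pp] /Pp [].
Qed.

Lemma prime_same P Q : same_ideal P Q -> prime_ideal P -> prime_ideal Q.
Proof.
move=> E [[P0 [PD PM]] [P1 Pp]]; split; [split; [|split]|split].
- by apply/E.
- by move=> a b /E Ha /E Hb; apply/E; apply: PD.
- by move=> r a /E Ha; apply/E; apply: PM.
- by move/E.
- by move=> a b /E /Pp [] /E; [left|right].
Qed.

Lemma ideal_same P Q : same_ideal P Q -> is_ideal P -> is_ideal Q.
Proof.
move=> E [P0 [PD PM]]; split; [|split].
- by apply/E.
- by move=> a b /E Ha /E Hb; apply/E; apply: PD.
- by move=> r a /E Ha; apply/E; apply: PM.
Qed.

End GenIdeal.
Arguments idealMr [R J a b]. Arguments idealMl [R J a b].

End P1.

Module P2.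
Import P1.
Import GRing.Theory.
Local Open Scope ring_scope.

Section MI.
Variables (n : nat) (K : fieldType).
Local Notation R := {mpoly K[n]}.
Implicit Types (D E : 'X_{1..n} -> Prop) (g h : R).

Definition MI D g := forall u, u \in msupp g -> D u.
Definition upclosed D := forall u v, D u -> (u <= v)%MM -> D v.

Lemma MI0 D : MI D 0.
Proof. by move=> u; rewrite msupp0. Qed.

Lemma MI_add D g h : MI D g -> MI D h -> MI D (g + h).
Proof. by move=> Hg Hh u /msuppD_le; rewrite mem_cat => /orP [/Hg|/Hh]. Qed.

Lemma MI_mul D E g h : MI D g -> MI E h ->
  MI (fun u => exists a b, D a /\ E b /\ u = (a + b)%MM) (g * h).
Proof.
move=> Hg Hh u /msuppM_le /allpairsP [[a b] /= [Ha Hb ->]].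
by exists a, b; split; [apply: Hg|split; [apply: Hh|]].
Qed.

Lemma MI_T g : MI (fun _ => True) g.
Proof. by []. Qed.

Lemma MI_ideal D : upclosed D -> is_ideal (MI D).
Proof.
move=> HD; split; [exact: MI0|split; first by move=> a b; apply: MI_add].
move=> r a Ha u /(MI_mul (@MI_T r) Ha) [x [y [_ [Hy ->]]]].
by apply: HD Hy _; apply: lem_addl.
Qed.

Lemma MI_X D u : D u -> MI D 'X_[u].
Proof. by move=> Hu v; rewrite msuppX inE => /eqP ->. Qed.

Lemma MI_sub D (J : R -> Prop) : is_ideal J -> (forall u, D u -> J 'X_[u]) ->
  subideal (MI D) J.
Proof.
move=> HJ HX g Hg; rewrite (mpolyE g); apply: ideal_sum => // u Hu.
by rewrite -mul_mpolyC; apply: idealMl => //; apply: HX; apply: Hg.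
Qed.

Lemma MI_mulX D w g : MI D g -> MI (fun u => exists2 a, D a & u = (w + a)%MM) ('X_[w] * g).
Proof.
move=> Hg u /(MI_mul (MI_X (D := fun x => x = w) erefl) Hg) [a [b [-> [Hb ->]]]].
by exists b.
Qed.

Lemma MI_imp D E g : (forall u, D u -> E u) -> MI D g -> MI E g.
Proof. by move=> H Hg u /Hg /H. Qed.

Definition dQ (A : {set 'I_n}) (u : 'X_{1..n}) := (\sum_(i in A) u i)%N.
Definition QP (A : {set 'I_n}) (m : nat) := MI (fun u => (m <= dQ A u)%N).

Lemma dQ_le A u v : (u <= v)%MM -> (dQ A u <= dQ A v)%N.
Proof. by move/mnm_lepP => H; apply: leq_sum => i _. Qed.

Lemma dQD A u v : dQ A (u + v)%MM = (dQ A u + dQ A v)%N.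
Proof. by rewrite /dQ -big_split; apply: eq_bigr => i _; rewrite mnmDE. Qed.

Lemma QP_ideal A m : is_ideal (QP A m).
Proof.
apply: MI_ideal => u v Hu Huv; apply: leq_trans Hu _; exact: dQ_le.
Qed.

Lemma dQ_pos A u : (0 < dQ A u)%N -> exists2 i, i \in A & (0 < u i)%N.
Proof.
move=> H; case: (boolP [exists i, (i \in A) && (0 < u i)%N]).
  by move/existsP => [i /andP [Hi Hu]]; exists i.
move/existsPn => Hn; move: H; rewrite /dQ big1 // => i Hi.
by move: (Hn i); rewrite Hi /= -leqNgt leqn0 => /eqP.
Qed.

Lemma dQU (A : {set 'I_n}) (i : 'I_n) : i \in A -> dQ A U_(i)%MM = 1%N.
Proof.
move=> Hi; rewrite /dQ (bigD1 i) //= mnm1E eqxx big1 // => j /andP [_ Hj].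
by rewrite mnm1E eq_sym (negbTE Hj).
Qed.

Definition varideal (A : {set 'I_n}) : R -> Prop :=
  gen_ideal (fun f : R => exists i, i \in A /\ f = 'X_i).

Lemma X_split (u : 'X_{1..n}) (i : 'I_n) : (0 < u i)%N -> 'X_[u] = 'X_[(u - U_(i))%MM] * ('X_i : R).
Proof.
move=> H; rewrite -mpolyXD submK //; apply/mnm_lepP => j.
by rewrite mnm1E; case: eqP => [<-|] //.
Qed.

Lemma varideal_QP A : same_ideal (varideal A) (QP A 1).
Proof.
move=> g; split.
  apply: gen_ideal_sub; first exact: QP_ideal.
  by move=> f [i [Hi ->]]; apply: MI_X; rewrite dQU.
apply: MI_sub; first exact: gen_ideal_is_ideal.
move=> u /dQ_pos [i Hi Hu]; rewrite (X_split Hu).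
apply: idealMl; first exact: gen_ideal_is_ideal.
by apply: gen_ideal_in; exists i.
Qed.

Lemma QP_X (A : {set 'I_n}) (i : 'I_n) : i \in A -> QP A 1 'X_i.
Proof. by move=> Hi; apply: MI_X; rewrite dQU. Qed.

Lemma QP_notX A (w : 'X_{1..n}) : (dQ A w = 0)%N -> ~ QP A 1 'X_[w].
Proof.
move=> Hw H; have := H w; rewrite msuppX inE eqxx Hw => /(_ isT).
by [].
Qed.

End MI.

End P2.

Module P3.
Import P1 P2.
Import GRing.Theory.
Local Open Scope ring_scope.

Section Prim.
Variables (n : nat) (K : fieldType) (A : {set 'I_n}).
Local Notation R := {mpoly K[n]}.

Definition hv (i : 'I_n) : {poly R} := if i \in A then 'X * ('X_i)%:P else ('X_i)%:P.
Definition fC : {rmorphism K -> {poly R}} := (polyC \o (@mpolyC n K)).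
Definition Phi (g : R) : {poly R} := mmap fC hv g.

Lemma PhiM g h : Phi (g * h) = Phi g * Phi h.
Proof. by rewrite /Phi rmorphM. Qed.

Lemma mmap1_hv u : mmap1 hv u = 'X^(dQ A u) * ('X_[u])%:P.
Proof.
rewrite /mmap1 /dQ mpolyXE_id rmorph_prod.
rewrite (eq_bigr (fun i => 'X ^+ (if i \in A then u i else 0%N) * (('X_i)^+ u i)%:P)); last first.
  move=> i _; rewrite /hv rmorphXn; case: ifP => _; last by rewrite expr0 mul1r.
  by rewrite exprMn.
by rewrite big_split /= prodrXr -big_mkcond.
Qed.

Lemma Phi_coef g k w :
  ((Phi g)`_k)@_w = if dQ A w == k then g@_w else 0.
Proof.
rewrite /Phi /mmap coef_sum.
rewrite (eq_bigr (fun u => if dQ A u == k then (g@_u)%:MP * 'X_[u] else 0)); last first.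
  move=> u _; rewrite mmap1_hv /= mulrA [_ * 'X^_]mulrC -mulrA coefXnM coefCM coefC.
  rewrite subn_eq0 [dQ A u == k]eq_sym; case: ltngtP => H //=; by rewrite mulr0.
rewrite -big_mkcond /= raddf_sum /=.
rewrite (eq_bigr (fun u => g@_u * (u == w)%:R)); last by move=> u _; rewrite mcoeffCM mcoeffX.
case: (boolP (w \in msupp g)) => Hw.
  rewrite big_mkcond (bigD1_seq w) //= big1 ?addr0.
    by case: eqP => _; rewrite ?eqxx ?mulr1.
  by move=> u /negbTE Hu; rewrite Hu; case: ifP => // _; rewrite mulr0.
rewrite big1 ?(memN_msupp_eq0 Hw) ?if_same // => u _.
case: eqP => [E|]; last by rewrite mulr0.
by move: Hw; rewrite -E => /memN_msupp_eq0 ->; rewrite mul0r.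
Qed.
Lemma Phi_low (g : R) k : (forall u, u \in msupp g -> (k < dQ A u)%N) -> (Phi g)`_k = 0.
Proof.
move=> H; apply/mpolyP => w; rewrite Phi_coef mcoeff0.
case: eqP => // E; apply: memN_msupp_eq0; apply/negP => /H; by rewrite E ltnn.
Qed.

Lemma QP_primary m (g h : R) : QP A m (g * h) -> ~ QP A 1 g -> QP A m h.
Proof.
move=> Hgh Hg.
have [u Hu Hu0] : exists2 u, u \in msupp g & dQ A u = 0%N.
  case: (boolP (all (fun u => 0 < dQ A u)%N (msupp g))).
    by move/allP => H; exfalso; apply: Hg => u /H.
  by case/allPn => u Hu; rewrite lt0n negbK => /eqP; exists u.
have G0 : (Phi g)`_0 != 0.
  apply/eqP => E; move: Hu; rewrite mcoeff_msupp -(_ : ((Phi g)`_0)@_u = g@_u).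
    by rewrite E mcoeff0 eqxx.
  by rewrite Phi_coef Hu0 eqxx.
have Hgh' : forall k, (k < m)%N -> (Phi g * Phi h)`_k = 0.
  move=> k Hkm; rewrite -PhiM.
  by apply: Phi_low => w /Hgh Hw; apply: leq_trans Hkm Hw.
have Hk : forall k, (k < m)%N -> (Phi h)`_k = 0.
  move: (Phi g) (Phi h) G0 Hgh' => G H G0 HGH.
  elim/ltn_ind => k IH Hkm.
  move: (HGH k Hkm); rewrite coefM big_ord_recl /= subn0.
  have -> : \sum_(i < k) G`_(bump 0 i) * H`_(k - bump 0 i) = 0.
    apply: big1 => i _.
    have Hi : (k - bump 0 i < k)%N.
      have Hk0 : (0 < k)%N by apply: leq_ltn_trans (ltn_ord i); exact: leq0n.
      by rewrite ltn_subrL Hk0.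
    have Hm : (k - bump 0 i < m)%N by exact: (ltn_trans Hi Hkm).
    by rewrite (IH _ Hi Hm) mulr0.
  by rewrite addr0 => /eqP; rewrite mulf_eq0 (negbTE G0) orFb => /eqP.
move=> w Hw; rewrite leqNgt; apply/negP => Hlt.
move: Hw; rewrite mcoeff_msupp -(_ : ((Phi h)`_(dQ A w))@_w = h@_w).
  by rewrite Hk // mcoeff0 eqxx.
by rewrite Phi_coef eqxx.
Qed.

Lemma QP_prime : prime_ideal (QP (K:=K) A 1).
Proof.
split; first exact: QP_ideal.
split.
  move=> H; have := H 0%MM; rewrite msupp1 inE eqxx => /(_ isT).
  by rewrite /dQ big1 // => i _; rewrite mnm0E.
move=> a b Hab; case: (classic (QP A 1 a)) => Ha; [by left|right].
exact: QP_primary Hab Ha.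
Qed.
End Prim.

End P3.

Module P4.
Import P1 P2 P3.
Import GRing.Theory.
Local Open Scope ring_scope.

Section GLemma.
Variables (n : nat) (K : fieldType).
Local Notation R := {mpoly K[n]}.

Definition Tm (Ws : seq {set 'I_n}) (m : nat) : R -> Prop :=
  MI (fun u => forall W, W \in Ws -> (m <= dQ W u)%N).

Lemma Tm_QP (Ws : seq {set 'I_n}) m W (g : R) : W \in Ws -> Tm Ws m g -> QP W m g.
Proof. by move=> HW H u /H; apply. Qed.

Lemma QP_Tm (Ws : seq {set 'I_n}) m (g : R) : (forall W, W \in Ws -> QP W m g) -> Tm Ws m g.
Proof. by move=> H u Hu W HW; apply: H. Qed.

Lemma dQMn W (u : 'X_{1..n}) k : dQ W (u *+ k)%MM = (dQ W u * k)%N.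
Proof.
rewrite /dQ big_distrl /=; apply: eq_bigr => i _; exact: mulmnE.
Qed.

Lemma G_aux (P : R -> Prop) (Ws : seq {set 'I_n}) m (f : R) : prime_ideal P ->
  (forall W, W \in Ws -> ~ subideal (colon (QP W m) f) P) ->
  exists g, ~ P g /\ (forall W, W \in Ws -> QP W m (g * f)).
Proof.
move=> HP; elim: Ws => [|W Ws IH] H.
  by exists 1; split => //; case: HP => _ [].
have [g [Pg Hg]] : exists g, ~ P g /\ (forall W, W \in Ws -> QP W m (g * f)).
  by apply: IH => W' HW'; apply: H; rewrite inE HW' orbT.
have [g' Hg' Pg'] : exists2 g', QP W m (g' * f) & ~ P g'.
  have := H W (mem_head _ _); rewrite /subideal => /not_all_ex_not [g' Hg'].
  by case: (imply_to_and _ _ Hg') => H1 H2; exists g'.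
exists (g' * g); split.
  by case: HP => _ [_ Pp] /Pp [].
move=> W' /predU1P [->|HW'].
  by rewrite mulrAC; apply: (idealMr (QP_ideal _ _ _)).
by rewrite -mulrA; apply: (idealMl (QP_ideal _ _ _)); apply: Hg.
Qed.

Lemma G_lemma (Ws : seq {set 'I_n}) m (f : R) (P : R -> Prop) :
  (0 < m)%N -> prime_ideal P -> same_ideal P (colon (Tm Ws m) f) ->
  exists2 W, W \in Ws & same_ideal P (QP W 1).
Proof.
move=> Hm HP HPT.
have [W HW HWP] : exists2 W, W \in Ws & subideal (colon (QP W m) f) P.
  apply: NNPP => C.
  have [g [Pg Hg]] := G_aux HP (fun W HW HS => C (ex_intro2 _ _ W HW HS)).
  by apply: Pg; apply/HPT; apply: QP_Tm.
have PW : forall g, P g -> QP W m (g * f).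
  by move=> g /HPT Hg; apply: Tm_QP HW Hg.
have Nf : ~ QP W m f.
  by move=> Hf; case: HP => _ [P1 _]; apply: P1; apply: HWP; rewrite /colon mul1r.
exists W => // g; split.
  move=> Pg; apply: NNPP => Hg; apply: Nf; exact: QP_primary (PW g Pg) Hg.
have HPi : is_ideal P by case: HP.
apply: MI_sub => // u Hu; apply: (@prime_exp _ _ _ m HP).
apply: HWP; rewrite /colon mpolyXn; apply: (idealMr (QP_ideal _ _ _)).
by apply: MI_X; rewrite dQMn; rewrite -[X in (X <= _)%N]mul1n leq_mul2r Hu orbT.
Qed.

End GLemma.

End P4.

Module P5.
Import P1 P2 P3 P4.

Section Cyc.
Variable n : nat.
Hypothesis n3 : (2 < n)%N.

Lemma n_gt0 : (0 < n)%N. Proof. by apply: ltn_trans n3. Qed.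

Definition sc (v : 'I_n) : 'I_n := Ordinal (ltn_pmod v.+1 n_gt0).

Lemma sc_val (v : 'I_n) : val (sc v) = if v.+1 == n then 0%N else v.+1.
Proof.
rewrite /=; case: eqP => [->|H]; first by rewrite modnn.
by rewrite modn_small // ltn_neqAle ltn_ord andbT; apply/eqP.
Qed.

Lemma pr_lt (v : 'I_n) : ((if (v : nat) == 0 then n.-1 else (v : nat).-1) < n)%N.
Proof. have := ltn_ord v; have := n3; case: eqP => _; lia. Qed.

Definition pr (v : 'I_n) : 'I_n := Ordinal (pr_lt v).

Lemma sc_inj : injective sc.
Proof.
move=> v w /(congr1 val); rewrite !sc_val => E; apply: val_inj => /=.
have := ltn_ord v; have := ltn_ord w; move: E; do 2 case: eqP; lia.
Qed.

Lemma sc_pr v : sc (pr v) = v.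
Proof.
apply: val_inj; rewrite sc_val /=; have := n3; case: v => x Hx /=.
by case: x Hx => [|x] Hx /=; case: ifP => /eqP; lia.
Qed.

Lemma eq_sc v w : (v == sc w) = (w == pr v).
Proof.
apply/eqP/eqP => [->|->]; last by rewrite sc_pr.
by apply: sc_inj; rewrite sc_pr.
Qed.

Lemma adjE (v w : 'I_n) : cycle_adj v w = (w == sc v) || (v == sc w).
Proof. by rewrite /cycle_adj -[w == sc v]val_eqE -[v == sc w]val_eqE. Qed.

Lemma NbE (v w : 'I_n) : (w \in closed_nbhd v) = [|| w == v, w == sc v | w == pr v].
Proof. by rewrite /closed_nbhd inE adjE [v == sc w]eq_sc. Qed.

Lemma Nb_set (v : 'I_n) : closed_nbhd v = [set v; sc v; pr v].
Proof. by apply/setP => w; rewrite NbE !inE orbA. Qed.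

Lemma neq_sc (v : 'I_n) : (v == sc v) = false.
Proof. apply/negbTE/eqP => /(congr1 val); rewrite sc_val; case: v => x Hx /=; case: eqP; lia. Qed.

Lemma neq_pr (v : 'I_n) : (v == pr v) = false.
Proof. apply/negbTE/eqP => /(congr1 val) /=; case: v => x Hx /=; case: eqP; lia. Qed.

Lemma neq_scpr (v : 'I_n) : (sc v == pr v) = false.
Proof.
apply/negbTE/eqP => /(congr1 val); rewrite sc_val /=; have := n3.
case: v => x Hx /=; case: x Hx => [|x] Hx /=; case: eqP; lia.
Qed.

Lemma card_Nb (v : 'I_n) : #|closed_nbhd v| = 3%N.
Proof.
rewrite Nb_set setUC !cardsU1 cards1 !inE.
by rewrite eq_sym neq_pr eq_sym neq_scpr neq_sc.
Qed.

Lemma Nb_sub (v w : 'I_n) : closed_nbhd w \subset closed_nbhd v -> closed_nbhd w = closed_nbhd v.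
Proof. by move=> H; apply/eqP; rewrite eqEcard H !card_Nb. Qed.

End Cyc.

End P5.

Module P6.
Import P1 P2 P3 P4 P5.

Lemma hitcount m a b :
  (count (fun c => has (fun t => t %% m == c) (iota a b)) (iota 0 m) <= b)%N.
Proof.
elim: b a => [|b IH] a; first by rewrite /= (eq_count (a2 := pred0)) ?count_pred0.
set p := (fun c => a %% m == c).
set q := (fun c => has (fun t => t %% m == c) (iota a.+1 b)).
apply: (@leq_trans (count (predU p q) (iota 0 m))).
  by apply: sub_count => c /=.
apply: (@leq_trans (count p (iota 0 m) + count q (iota 0 m))).
  by rewrite -count_predUI leq_addr.
rewrite -add1n; apply: leq_add; last exact: IH.
rewrite (eq_count (a2 := pred1 (a %% m))); last by move=> c; rewrite /p /= eq_sym.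
by rewrite count_uniq_mem ?iota_uniq //; case: (_ \in _).
Qed.

Lemma choose_t m s c : (c < m)%N -> exists t, [/\ (s <= t)%N, (t < s + m)%N & t %% m = c].
Proof.
move=> Hc; have Hm : (0 < m)%N by apply: leq_ltn_trans Hc.
have E := divn_eq s m; have Hr := ltn_pmod s Hm.
case: (leqP (s %% m) c) => H.
  exists (s + (c - s %% m)); split; [lia|lia|].
  have -> : s + (c - s %% m) = s %/ m * m + c by lia.
  by rewrite modnMDl modn_small.
exists (s + (m - s %% m + c)); split; [lia|lia|].
have -> : s + (m - s %% m + c) = (s %/ m).+1 * m + c by rewrite mulSn; lia.
by rewrite modnMDl modn_small.
Qed.

Section LemK.
Variable n : nat.
Hypothesis n3 : (2 < n)%N.
Variables (j : 'I_n) (m : nat) (u : 'I_n -> nat).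

Definition pos k : 'I_n := iter k.+1 (sc n3) j.

Lemma pos_val k : (pos k : nat) = (j + k.+1) %% n.
Proof.
elim: k => [|k IH]; first by rewrite /= addn1.
rewrite (_ : pos k.+1 = sc n3 (pos k)) //.
rewrite (_ : (sc n3 (pos k) : nat) = (pos k).+1 %% n) //.
by rewrite IH -addn1 modnDml addn1 !addnS.
Qed.

Lemma sc_pos k : sc n3 (pos k) = pos k.+1.
Proof. by []. Qed.

Lemma pos_last : pos n.-1 = j.
Proof.
apply: ord_inj; rewrite pos_val prednK ?(ltn_trans _ n3) // modnDr modn_small //.
Qed.

Lemma pos_inj k k' : (k < n)%N -> (k' < n)%N -> pos k = pos k' -> k = k'.
Proof.
move=> Hk Hk' /(congr1 (@nat_of_ord n)); rewrite !pos_val !addnS -!addSn => /eqP.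
by rewrite eqn_modDl !modn_small // => /eqP.
Qed.

Lemma pos_surj (v : 'I_n) : exists2 k, (k < n)%N & pos k = v.
Proof.
exists ((v + (n - j.+1)) %% n); first by rewrite ltn_pmod // (ltn_trans _ n3).
apply: ord_inj; rewrite pos_val addnS -addSn modnDmr.
have -> : j.+1 + (v + (n - j.+1)) = v + n by have := ltn_ord j; lia.
by rewrite modnDr modn_small.
Qed.

Definition Pf x := (\sum_(0 <= k < x) u (pos k))%N.

Lemma PfS k : Pf k.+1 = (Pf k + u (pos k))%N.
Proof. by rewrite /Pf big_nat_recr. Qed.

Lemma locate a x t : (Pf a <= t)%N -> (t < Pf (a + x))%N ->
  exists k, [/\ (a <= k)%N, (k < a + x)%N & t \in iota (Pf k) (u (pos k))].
Proof.
move=> Ha; elim: x => [|x IH]; first by rewrite addn0 ltnNge Ha.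
rewrite addnS PfS => Ht.
case: (ltnP t (Pf (a + x))) => H.
  by case: (IH H) => k [H1 H2 H3]; exists k; split => //; rewrite ltnS ltnW.
by exists (a + x); split; rewrite ?leq_addr ?ltnSn // mem_iota H Ht.
Qed.

Definition Sc c : {set 'I_n} := [set l | (l == j) || [exists k : 'I_n.-1,
  (pos k == l) && has (fun t => t %% m == c) (iota (Pf k) (u l))]].

Lemma Sc_count (i : 'I_n) : i != j -> (count (fun c => i \in Sc c) (iota 0 m) <= u i)%N.
Proof.
move=> Hij; have [ki Hki Ei] := pos_surj i.
apply: (@leq_trans (count (fun c => has (fun t => t %% m == c) (iota (Pf ki) (u i))) (iota 0 m))); last first.
  exact: hitcount.
apply: sub_count => c; rewrite /Sc inE (negbTE Hij) /= => /existsP [k /andP [/eqP Ek Hk]].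
have Hkn : (k < n)%N by apply: leq_trans (ltn_ord k) (leq_pred n).
by rewrite -(pos_inj Hkn Hki (etrans Ek (esym Ei))).
Qed.

Lemma sum3_le (A : {set 'I_n}) x y z :
  (forall w, w \in A -> [|| w == x, w == y | w == z]) ->
  (\sum_(i in A) u i <= u x + u y + u z)%N.
Proof.
move=> HA.
have E : forall w : 'I_n, \sum_(i < n) ((i == w) * u i)%N = u w.
  move=> w; rewrite (bigD1 w) //= eqxx mul1n big1 ?addn0 // => i /negbTE ->.
  by rewrite mul0n.
rewrite -E -(E y) -(E z) -!big_split /= big_mkcond /=.
apply: leq_sum => i _; case: ifP => // /HA /or3P [] /eqP ->; rewrite eqxx; lia.
Qed.

Hypothesis Hu : forall v : 'I_n, j \notin closed_nbhd v -> (m <= \sum_(i in closed_nbhd v) u i)%N.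

Lemma Sc_dom c : (c < m)%N -> dominating (Sc c).
Proof.
move=> Hc; apply/forallP => v; apply/set0Pn.
case: (boolP (j \in closed_nbhd v)) => Hj.
  by exists j; rewrite inE Hj andbT /Sc inE eqxx.
have [k0 Hk0 Ev] := pos_surj v.
have Hn1 : k0 != n.-1.
  apply/eqP => E; move: Hj; rewrite -Ev E pos_last NbE eqxx //.
have Hn0 : k0 != 0%N.
  apply/eqP => E; move: Hj; rewrite NbE -eq_sc -Ev E.
  by rewrite (_ : pos 0 = sc n3 j) // eqxx !orbT.
have Hn2 : k0.+1 != n.-1.
  apply/eqP => E; move: Hj; rewrite NbE -Ev sc_pos E pos_last eqxx orbT //.
set a := k0.-1.
have Ea : a.+1 = k0 by rewrite /a prednK // lt0n.
have Ha2 : (a.+2 < n.-1)%N by move: Hk0 Hn1 Hn2 Hn0; rewrite -Ea; lia.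
have Epr : pr n3 v = pos a.
  by apply/eqP; rewrite eq_sym -eq_sc sc_pos Ea Ev.
have Esc : sc n3 v = pos a.+2 by rewrite -Ev -Ea sc_pos.
have Ev' : v = pos a.+1 by rewrite Ea Ev.
have Hsum := Hu Hj.
have Hsum2 : (\sum_(i in closed_nbhd v) u i <= u (pos a) + u (pos a.+1) + u (pos a.+2))%N.
  apply: sum3_le => w; rewrite NbE -Ev' -Esc -Epr.
  by case/or3P => ->; rewrite ?orbT.
have HP : Pf (a + 3) = (Pf a + u (pos a) + u (pos a.+1) + u (pos a.+2))%N.
  by rewrite !addnS addn0 !PfS.
have [t [Ht1 Ht2 Ht3]] := choose_t (Pf a) Hc.
have Ht2' : (t < Pf (a + 3))%N by rewrite HP; lia.
have [k [Hk1 Hk2 Hk3]] := locate Ht1 Ht2'.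
have Hkn : (k < n.-1)%N by lia.
exists (pos k); rewrite inE; apply/andP; split.
  rewrite /Sc inE; apply/orP; right; apply/existsP; exists (Ordinal Hkn) => /=.
  by rewrite eqxx /=; apply/hasP; exists t => //; apply/eqP.
rewrite NbE Esc Epr Ev'.
have : [|| k == a, k == a.+1 | k == a.+2] by lia.
by case/or3P => /eqP ->; rewrite eqxx ?orbT.
Qed.

Lemma lemK : exists Ss : seq {set 'I_n}, [/\ size Ss = m, all (@dominating n) Ss &
  forall i : 'I_n, (count (fun S : {set 'I_n} => i \in S) Ss <= u i + (i == j) * m)%N].
Proof.
exists [seq Sc c | c <- iota 0 m]; split.
- by rewrite size_map size_iota.
- by apply/allP => S /mapP [c]; rewrite mem_iota add0n => /andP [_ Hc] ->; apply: Sc_dom.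
- move=> i; rewrite count_map; case: (eqVneq i j) => [->|Hij].
    by rewrite mul1n; apply: leq_trans (count_size _ _) _; rewrite size_iota leq_addl.
  by rewrite mul0n addn0; exact: Sc_count.
Qed.

End LemK.

End P6.

Module P7.
Import P1 P2 P3 P4 P5 P6.
Import GRing.Theory.
Local Open Scope ring_scope.

Section DIpart.
Variables (n : nat) (K : fieldType).
Hypothesis n3 : (2 < n)%N.
Local Notation R := {mpoly K[n]}.
Local Notation I := (DI_cycle n K).
Local Notation Nb := (@closed_nbhd n).

Definition Dm (m : nat) (u : 'X_{1..n}) := exists Ss : seq {set 'I_n},
  [/\ size Ss = m, all (@dominating n) Ss &
      forall i : 'I_n, (count (fun S : {set 'I_n} => i \in S) Ss <= u i)%N].

Lemma mesym1E (S : {set 'I_n}) i : mesym1 S i = (i \in S).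
Proof. by rewrite /mesym1 mnmE. Qed.

Lemma prodXS (S : {set 'I_n}) : \prod_(i in S) ('X_i : R) = 'X_[mesym1 S].
Proof.
rewrite [RHS]mpolyXE_id big_mkcond /=; apply: eq_bigr => i _.
by rewrite mesym1E; case: (i \in S); rewrite ?expr1 ?expr0.
Qed.

Lemma dom_I (S : {set 'I_n}) : dominating S -> I 'X_[mesym1 S].
Proof.
move=> HS; have [S0 HS0 Hsub] := minset_exists (P := @dominating n) HS.
have Hle : (mesym1 S0 <= mesym1 S)%MM.
  by apply/mnm_lepP => i; rewrite !mesym1E; case: (boolP (i \in S0)) => // /(subsetP Hsub) ->.
rewrite -(submK Hle) mpolyXD; apply: idealMl; first exact: gen_ideal_is_ideal.
apply: gen_ideal_in; exists S0; split; last by rewrite prodXS.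
case/minsetP: HS0 => H1 H2; apply/andP; split => //.
apply/forallP => T; apply/implyP => /properP [HT [x Hx Hnx]]; apply/negP => HdT.
by have E := H2 T HdT HT; move: Hnx; rewrite E Hx.
Qed.

Lemma Dm_up m : upclosed (Dm m).
Proof.
move=> u v [Ss [H1 H2 H3]] /mnm_lepP Huv; exists Ss; split => // i.
exact: leq_trans (H3 i) (Huv i).
Qed.

Lemma Dm_add k (a b : 'X_{1..n}) : Dm 1 a -> Dm k b -> Dm k.+1 (a + b)%MM.
Proof.
move=> [[|S [|? ?]] [//= _ HS Ha]] [Ss [H1 H2 H3]].
exists (S :: Ss); split; first by rewrite /= H1.
  by rewrite /= H2 andbT; move: HS => /= /andP [].
move=> i; rewrite /= mnmDE; apply: leq_add; last exact: H3.
by have := Ha i; rewrite /= addn0.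
Qed.

Lemma I_MI1 : subideal I (MI (Dm 1)).
Proof.
apply: gen_ideal_sub; first exact: MI_ideal (@Dm_up 1).
move=> f [S [/andP [HS _] ->]]; rewrite prodXS; apply: MI_X.
exists [:: S]; split => //=; first by rewrite HS.
by move=> i; rewrite addn0 mesym1E.
Qed.

Lemma pow_MI m : subideal (ideal_pow I m) (MI (Dm m)).
Proof.
apply: gen_ideal_sub; first exact: MI_ideal (@Dm_up m).
move=> f [s [<- [Hs ->]]]; elim: s Hs => [|a s IH] Hs.
  rewrite big_nil => u; rewrite msupp1 inE => /eqP ->.
  by exists [::]; split.
have Hs' : forall b, b \in s -> I b by move=> b Hb; apply: Hs; rewrite inE Hb orbT.
rewrite big_cons => u /(MI_mul (I_MI1 (Hs a (mem_head _ _))) (IH Hs')) [x [y [Hx [Hy ->]]]].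
exact: Dm_add.
Qed.

Lemma count_sum (Ss : seq {set 'I_n}) i :
  (\sum_(S <- Ss) mesym1 S)%MM i = count (fun S : {set 'I_n} => i \in S) Ss.
Proof.
rewrite mnm_sumE; elim: Ss => [|X Ss IH]; first by rewrite big_nil.
by rewrite big_cons IH mesym1E.
Qed.

Lemma MI_pow m : subideal (MI (Dm m)) (ideal_pow I m).
Proof.
apply: MI_sub; first exact: gen_ideal_is_ideal.
move=> u [Ss [H1 H2 H3]].
set w := (\sum_(X <- Ss) mesym1 X)%MM.
have Hw : (w <= u)%MM by apply/mnm_lepP => i; rewrite count_sum.
rewrite -(submK Hw) mpolyXD; apply: idealMl; first exact: gen_ideal_is_ideal.
apply: gen_ideal_in; exists [seq 'X_[mesym1 X] | X <- Ss]; split.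
  by rewrite size_map.
split.
  by move=> a /mapP [X HX ->]; apply: dom_I; move/allP: H2; apply.
by rewrite big_map mprodXE.
Qed.
Lemma sumcount (A : {set 'I_n}) (Ss : seq {set 'I_n}) :
  all (fun S : {set 'I_n} => S :&: A != set0) Ss ->
  (size Ss <= \sum_(i in A) count (fun S : {set 'I_n} => i \in S) Ss)%N.
Proof.
elim: Ss => [|X Ss IH] //= /andP [HX HSs].
rewrite big_split /= -add1n; apply: leq_add; last exact: IH.
case/set0Pn: HX => x; rewrite inE => /andP [Hx1 Hx2].
by rewrite (bigD1 x) //= Hx1 leq_addr.
Qed.

Lemma Dm_Nb m u : Dm m u -> forall v, (m <= dQ (Nb v) u)%N.
Proof.
move=> [Ss [<- H2 H3]] v.
apply: leq_trans (sumcount (A := Nb v) _) _.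
  by apply/allP => X /(allP H2); rewrite /dominating => /forallP /(_ v).
by apply: leq_sum => i _; apply: H3.
Qed.

Lemma Nb_Dm1 u : (forall v, (1 <= dQ (Nb v) u)%N) -> Dm 1 u.
Proof.
move=> H; exists [:: [set i | (0 < u i)%N]]; split => //=.
  rewrite andbT; apply/forallP => v; apply/set0Pn.
  by have [i Hi Hu] := dQ_pos (H v); exists i; rewrite inE Hi andbT inE Hu.
by move=> i; rewrite addn0 inE; case: (u i).
Qed.

Lemma K_Dm m (j : 'I_n) u : (forall v, j \notin Nb v -> (m <= dQ (Nb v) u)%N) ->
  Dm m (u + U_(j) *+ m)%MM.
Proof.
move=> Hu; have [Ss [H1 H2 H3]] := @lemK n n3 j m (fun i => u i) Hu.
exists Ss; split => // i; rewrite mnmDE mulmnE mnm1E eq_sym; exact: H3.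
Qed.

Definition Qv (v : 'I_n) : R -> Prop := QP (Nb v) 1.

Lemma Qv_prime v : prime_ideal (Qv v).
Proof. exact: QP_prime. Qed.

Lemma dQ_mesym1 (A S : {set 'I_n}) : S :&: A != set0 -> (1 <= dQ A (mesym1 S))%N.
Proof.
case/set0Pn => x; rewrite inE => /andP [Hx1 Hx2].
by rewrite /dQ (bigD1 x) //= mesym1E Hx1.
Qed.

Lemma I_Qv v : subideal I (Qv v).
Proof.
apply: gen_ideal_sub; first exact: QP_ideal.
move=> f [S [/andP [HS _] ->]]; rewrite prodXS; apply: MI_X.
by apply: dQ_mesym1; move/forallP: HS; apply.
Qed.

Lemma QP_sub_ideal (A : {set 'I_n}) (P : R -> Prop) : is_ideal P ->
  (forall i, i \in A -> P 'X_i) -> subideal (QP A 1) P.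
Proof.
move=> HP HX g /(varideal_QP A g); apply: gen_ideal_sub => // f [i [Hi ->]].
exact: HX.
Qed.

Definition notP (P : R -> Prop) (i : 'I_n) : bool :=
  if excluded_middle_informative (P 'X_i) then false else true.

Lemma prime_contains (P : R -> Prop) : prime_ideal P -> subideal I P ->
  exists v, subideal (Qv v) P.
Proof.
move=> HP HIP; apply: NNPP => H.
have Hv : forall v, exists2 i, i \in Nb v & ~ P 'X_i.
  move=> v; apply: NNPP => C; apply: H; exists v.
  apply: QP_sub_ideal; first by case: HP.
  by move=> i Hi; apply: NNPP => Hn; apply: C; exists i.
set S := [set i | notP P i].
have HS : dominating S.
  apply/forallP => v; apply/set0Pn; have [i Hi Hn] := Hv v.
  exists i; rewrite inE Hi andbT inE /notP.
  by case: excluded_middle_informative.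
have := HIP _ (dom_I HS); rewrite -prodXS -big_enum => /(prime_prod HP) [i].
rewrite mem_enum inE /notP; case: excluded_middle_informative => //.
Qed.

Lemma Qv_sub v v' : subideal (Qv v') (Qv v) -> Nb v' = Nb v.
Proof.
move=> H; apply: (Nb_sub n3); apply/subsetP => i Hi.
have := H _ (@QP_X n K _ _ Hi) U_(i)%MM; rewrite msuppX inE eqxx => /(_ isT).
case/dQ_pos => k Hk; rewrite mnm1E; case: eqP => [->|] //.
Qed.

Lemma Qv_min v : is_min_prime I (Qv v).
Proof.
split; first exact: Qv_prime.
split; first exact: I_Qv.
move=> Q HQ HIQ HQv; have [v' Hv'] := prime_contains HQ HIQ.
have E := Qv_sub (fun g Hg => HQv g (Hv' g Hg)).
by move=> g; rewrite /Qv -E; apply: Hv'.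
Qed.

Lemma min_Qv P : is_min_prime I P -> exists v, same_ideal P (Qv v).
Proof.
move=> [HP [HIP Hmin]]; have [v Hv] := prime_contains HP HIP.
exists v => g; split; last exact: Hv.
by apply: (Hmin _ (Qv_prime v) (I_Qv v) Hv).
Qed.

Lemma min_same P Q : same_ideal P Q -> is_min_prime I P -> is_min_prime I Q.
Proof.
move=> E [HP [HIP Hmin]]; split; first exact: prime_same E HP.
split; first by move=> g /HIP /E.
move=> Q' HQ' HIQ' HQ'Q g /E Hg; apply: (Hmin Q' HQ' HIQ') => // h /HQ'Q /E //.
Qed.

Lemma colon_ideal (J : R -> Prop) f : is_ideal J -> is_ideal (colon J f).
Proof.
move=> [J0 [JD JM]]; split; [by rewrite /colon mul0r|split].
  by move=> a b Ha Hb; rewrite /colon mulrDl; apply: JD.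
by move=> r a Ha; rewrite /colon -mulrA; apply: JM.
Qed.

Definition Fv (v : 'I_n) : R := 'X_[mesym1 (~: Nb v)].

Lemma Fv_notQ v : ~ Qv v (Fv v).
Proof.
apply: QP_notX; rewrite /dQ big1 // => i Hi.
by rewrite mesym1E inE Hi.
Qed.

Lemma Dm1_Fv v u : (1 <= dQ (Nb v) u)%N -> Dm 1 (u + mesym1 (~: Nb v))%MM.
Proof.
move=> Hu; apply: Nb_Dm1 => v'; rewrite dQD.
case: (boolP (Nb v' \subset Nb v)) => Hs.
  by rewrite (Nb_sub n3 Hs); apply: leq_trans Hu (leq_addr _ _).
case/subsetPn: Hs => i Hi1 Hi2; apply: leq_trans (leq_addl _ _).
by apply: dQ_mesym1; apply/set0Pn; exists i; rewrite inE Hi1 andbT inE Hi2.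
Qed.

Lemma colon_Fv v : same_ideal (Qv v) (colon (ideal_pow I 1) (Fv v)).
Proof.
move=> g; split.
  apply: MI_sub; first exact: colon_ideal (gen_ideal_is_ideal _).
  move=> u Hu; rewrite /colon /Fv -mpolyXD; apply: MI_pow; apply: MI_X.
  exact: Dm1_Fv.
rewrite /colon => /pow_MI /(MI_imp (fun u Hu => Dm_Nb Hu v)) HQ.
by case: (Qv_prime v) => _ [_ Pp]; case: (Pp _ _ HQ) => // /Fv_notQ.
Qed.

Definition Ws_all : seq {set 'I_n} := [seq Nb v | v <- enum 'I_n].

Lemma ass_min1 P : is_ass (ideal_pow I 1) P -> is_min_prime I P.
Proof.
move=> [HP [f Hf]].
have HT : same_ideal P (colon (Tm Ws_all 1) f).
  move=> g; rewrite Hf /colon; split.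
    move=> /pow_MI H u Hu W /mapP [v _ ->]; exact: Dm_Nb (H u Hu) v.
  move=> H; apply: MI_pow => u Hu; apply: Nb_Dm1 => v; apply: H Hu _ _.
  by apply: map_f; rewrite mem_enum.
have [W /mapP [v _ ->] HW] := G_lemma (isT : (0 < 1)%N) HP HT.
by apply: min_same (Qv_min v) => g; split => /HW.
Qed.

Lemma min_ass1 P : is_min_prime I P -> is_ass (ideal_pow I 1) P.
Proof.
move=> HP; have [v Hv] := min_Qv HP; split; first by case: HP.
by exists (Fv v) => g; rewrite Hv; exact: colon_Fv.
Qed.

Lemma max_case (P : R -> Prop) : prime_ideal P -> (forall j, P 'X_j) ->
  same_ideal P (varideal [set: 'I_n]).
Proof.
move=> HP HX.
have HPi : is_ideal P by case: HP.
have Hsub : subideal (QP [set: 'I_n] 1) P by apply: QP_sub_ideal => // i _; apply: HX.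
suff E : same_ideal P (QP [set: 'I_n] 1).
  by move=> g; rewrite E; split => /(varideal_QP _ g).
move=> g; split; last exact: Hsub.
move=> Pg; set c := g@_0%MM; set h := g - c%:MP.
have Hh : QP [set: 'I_n] 1 h.
  move=> u Hu; case: (boolP [exists i, u i != 0%N]).
    case/existsP => i Hi; rewrite /dQ (bigD1 i) ?in_setT //=; rewrite -lt0n in Hi.
    exact: leq_trans Hi (leq_addr _ _).
  move/existsPn => H0; have Eu : u = 0%MM.
    by apply/mnmP => i; rewrite mnm0E; move: (H0 i); rewrite negbK => /eqP.
  move: Hu; rewrite Eu mcoeff_msupp /h mcoeffB mcoeffC eqxx mulr1 subrr eqxx //.
have Pc : P c%:MP.
  have -> : c%:MP = g - h by rewrite /h opprB addrC subrK.
  case: HPi => _ [PD PM]; apply: PD => //.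
  by rewrite -mulN1r; apply: PM; apply: Hsub.
case: (eqVneq c 0) => Hc.
  by move: Hh; rewrite /h Hc mpolyC0 subr0.
exfalso; case: HP => _ [P1 _]; apply: P1.
have -> : (1 : R) = (c^-1)%:MP * c%:MP by rewrite -mpolyCM mulVf // mpolyC1.
by case: HPi => _ [_ PM]; apply: PM.
Qed.

Lemma ass_m m P : (2 <= m)%N -> is_ass (ideal_pow I m) P ->
  is_min_prime I P \/ same_ideal P (varideal [set: 'I_n]).
Proof.
move=> Hm [HP [f Hf]].
have Hf' : same_ideal P (colon (MI (Dm m)) f).
  by move=> g; rewrite Hf /colon; split => [/pow_MI|/MI_pow].
case: (classic (exists j, ~ P 'X_j)); last first.
  move=> H; right; apply: max_case => // j; apply: NNPP => Hj; apply: H; by exists j.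
move=> [j Hj]; left.
set Ws := [seq Nb v | v <- enum 'I_n & j \notin Nb v].
have HT : same_ideal P (colon (Tm Ws m) f).
  move=> g; split.
    move=> /Hf' H u Hu W /mapP [v]; rewrite mem_filter => /andP [Hjv _] ->.
    exact: Dm_Nb (H u Hu) v.
  rewrite /colon => H.
  have HX : MI (Dm m) ('X_[(U_(j) *+ m)%MM] * (g * f)).
    move=> u /(MI_mulX (w := (U_(j) *+ m)%MM) H) [a Ha ->]; rewrite addmC.
    apply: K_Dm => v Hjv; apply: Ha; apply/mapP; exists v => //.
    by rewrite mem_filter Hjv mem_enum.
  have : P ('X_[(U_(j) *+ m)%MM] * g) by apply/Hf'; rewrite /colon -mulrA.
  case/(proj2 (proj2 HP)) => [|//].
  by rewrite -mpolyXn => /(prime_exp HP) /Hj.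
have Hm0 : (0 < m)%N by apply: leq_trans Hm.
have [W /mapP [v _ ->] HW] := G_lemma Hm0 HP HT.
by apply: min_same (Qv_min v) => g; split => /HW.
Qed.
End DIpart.

End P7.

Import P1 P2 P3 P4 P5 P6 P7.

Theorem theorem3p9 (K : fieldType) (n : nat) :
  (3 <= n)%N -> nearly_normally_torsion_free (DI_cycle n K).
Proof.
move=> n3; split.
  exists (fun f : {mpoly K[n]} => exists S : {set 'I_n},
     minimal_dominating S /\ f = (\prod_(i in S) 'X_i)%R); split.
    by move=> f [S [_ ->]]; exists (mesym1 S); exact: prodXS.
  by move=> f; split.
exists 1%N, (varideal [set: 'I_n]); split => //; split.
  by exists [set: 'I_n] => f; split.
split.
  move=> m /andP [H1 H2]; have -> : m = 1%N by apply/eqP; rewrite eqn_leq H1 H2.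
  move=> P; split; [exact: ass_min1|exact: min_ass1].
move=> m Hm P HP; have Hm2 : (2 <= m)%N by [].
by move: (ass_m n3 Hm2 HP).
Qed.
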